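(* Let Assumptions 1 and 2 hold. For every $\eta>0$, every horizon $T\ge 1$ and every sequence of payoff vectors $u_1,\dots,u_T\in\mathbb{R}^N$ with $\|u_t\|_\infty\le u_{\max}$, the regret of the SSA with parameter $\eta$ satisfies $$R^T_{SSA}\le \eta\,\varphi_1(0)+\frac{L}{2\eta}\,T\,u_{\max}^2 ,$$ where $\varphi_1(0)=\mathbb{E}[\max_{i\in A}\epsilon_i]$. Moreover, if $\varphi_1(0)>0$ and $\eta=\sqrt{\frac{L T u_{\max}^2}{2\varphi_1(0)}}$, then $$R^T_{SSA}\le u_{\max}\sqrt{2\,\varphi_1(0)\,L\,T}.$$
   Context: Let $N\ge 2$, $A=\{1,\dots,N\}$, and $\Delta_N=\{x\in\mathbb{R}^N: x_i\ge 0,\ \sum_i x_i=1\}$. Let $\epsilon=(\epsilon_1,\dots,\epsilon_N)$ be a random vector satisfying Assumption 1: each $\epsilon_i$ is integrable with $\mathbb{E}[\epsilon_i]=0$, and the law of $\epsilon$ is absolutely continuous with respect to Lebesgue measure on $\mathbb{R}^N$ with support all of $\mathbb{R}^N$. For $\eta>0$ the social surplus function is $\varphi_\eta(\theta)=\mathbb{E}[\max_{j\in A}(\theta_j+\eta\epsilon_j)]$, $\theta\in\mathbb{R}^N$; thus $\varphi_\eta(\theta)=\eta\varphi_1(\theta/\eta)$. $\varphi_\eta$ is convex and differentiable with $\nabla\varphi_\eta(\theta)\in\Delta_N$. Assumption 2: $\varphi_1$ is twice continuously differentiable and there is a constant $L>0$ with $2\,\mathrm{tr}(\nabla^2\varphi_1(\theta))\le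 L$ for all $\theta\in\mathbb{R}^N$. Online decision problem: payoff vectors $u_1,\dots,u_T\in\mathbb{R}^N$ are arbitrary (possibly adversarial, possibly depending on past choices); set $\theta_0=0$ and $\theta_t=\sum_{s=1}^t u_s$. The regret of a sequence $x_1,\dots,x_T\in\Delta_N$ is $R^T=\max_{x\in\Delta_N}\langle\theta_T,x\rangle-\sum_{t=1}^T\langle u_t,x_t\rangle$. The Social Surplus Algorithm (SSA) with parameter $\eta$ chooses $x_t=\nabla\varphi_\eta(\theta_{t-1})$ for $t=1,\dots,T$; $R^T_{SSA}$ is its regret. *)

(* Defs.v *)
From HB Require Import structures.
From mathcomp Require Import all_boot all_order all_algebra.
From mathcomp Require Import all_classical all_reals all_analysis.
Set Implicit Arguments. Unset Strict Implicit. Unset Printing Implicit Defensive.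
Import Order.TTheory GRing.Theory Num.Theory.
Import numFieldNormedType.Exports.
Local Open Scope classical_set_scope.
Local Open Scope ring_scope.

(* Vectors of R^N are row vectors 'rV[R]_N; coordinate i is v 0 i. *)

Definition dotv {R : realType} {N : nat} (x y : 'rV[R]_N) : R :=
  \sum_(i < N) x 0 i * y 0 i.

Definition simplex {R : realType} (N : nat) : set 'rV[R]_N :=
  [set x | (forall i, 0 <= x 0 i) /\ \sum_(i < N) x 0 i = 1].

Definition obox {R : realType} {N : nat} (a b : 'rV[R]_N) : set 'rV[R]_N :=
  [set x | forall i, a 0 i < x 0 i < b 0 i].
Definition bvol {R : realType} {N : nat} (a b : 'rV[R]_N) : R :=
  \prod_(i < N) (b 0 i - a 0 i).

Definition lebesgue_null {R : realType} {N : nat} (B : set 'rV[R]_N) : Prop :=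
  forall e : R, 0 < e ->
    exists a b : nat -> 'rV[R]_N,
      (forall k i, a k 0 i < b k 0 i) /\
      B `<=` \bigcup_k obox (a k) (b k) /\
      (forall n, \sum_(k < n) bvol (a k) (b k) <= e).

Definition assumption1 {R : realType} {N : nat} {d : measure_display}
  {Omega : measurableType d} (P : probability Omega R)
  (eps : Omega -> 'rV[R]_N) : Prop :=
  (forall i, measurable_fun setT (fun w => eps w 0 i)) /\
  (forall i, P.-integrable setT (fun w => (eps w 0 i)%:E)) /\
  (forall i, expectation P (fun w => eps w 0 i) = 0%E) /\
  (* the law of eps is absolutely continuous w.r.t. Lebesgue measure *)
  (forall B : set 'rV[R]_N, lebesgue_null B ->
     measurable (eps @^-1` B) -> P (eps @^-1` B) = 0%E) /\
  (* the support of the law of eps is all of R^N *)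
  (forall (x : 'rV[R]_N) (r : R), 0 < r -> (0 < P (eps @^-1` ball x r))%E).

Definition surplus {R : realType} {N : nat} {d : measure_display}
  {Omega : measurableType d} (P : probability Omega R)
  (eps : Omega -> 'rV[R]_N) (eta : R) (theta : 'rV[R]_N) : R :=
  fine (\int[P]_w (\big[Order.max/-oo%E]_(j < N) (theta 0 j + eta * eps w 0 j)%:E))%E.

Definition evec {R : realType} {N : nat} (i : 'I_N) : 'rV[R]_N := delta_mx 0 i.
Definition partial {R : realType} {N : nat} (i : 'I_N)
  (f : 'rV[R]_N -> R) : 'rV[R]_N -> R :=
  fun x => 'D_(evec i) f x.
Definition grad {R : realType} {N : nat} (f : 'rV[R]_N -> R)
  (x : 'rV[R]_N) : 'rV[R]_N :=
  \row_i partial i f x.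

Definition C2 {R : realType} {N : nat} (f : 'rV[R]_N -> R) : Prop :=
  (forall x, differentiable f x) /\
  (forall i x, differentiable (partial i f) x) /\
  (forall i j, continuous (partial j (partial i f))).

Definition hess_trace {R : realType} {N : nat} (f : 'rV[R]_N -> R)
  (x : 'rV[R]_N) : R :=
  \sum_(i < N) partial i (partial i f) x.

Definition assumption2 {R : realType} {N : nat} (phi1 : 'rV[R]_N -> R) (L : R) : Prop :=
  C2 phi1 /\ 0 < L /\ (forall x, 2 * hess_trace phi1 x <= L).

Definition cumul {R : realType} {N : nat} (u : nat -> 'rV[R]_N) (t : nat) : 'rV[R]_N :=
  \sum_(1 <= s < t.+1) u s.

Definition regret {R : realType} {N : nat} (T : nat) (u x : nat -> 'rV[R]_N) : R :=
  sup [set dotv (cumul u T) y | y in @simplex R N]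
  - \sum_(1 <= t < T.+1) dotv (u t) (x t).

Definition ssa {R : realType} {N : nat} {d : measure_display}
  {Omega : measurableType d} (P : probability Omega R)
  (eps : Omega -> 'rV[R]_N) (eta : R) (u : nat -> 'rV[R]_N) (t : nat) : 'rV[R]_N :=
  grad (surplus P eps eta) (cumul u t.-1).

(* Main.v *)
Require Import Defs.
From HB Require Import structures.
From mathcomp Require Import all_boot all_order all_algebra.
From mathcomp Require Import all_classical all_reals all_analysis.
From mathcomp Require Import ring lra measurable_realfun.
Import Order.TTheory GRing.Theory Num.Theory.
Import numFieldNormedType.Exports.
Local Open Scope classical_set_scope.
Local Open Scope ring_scope.



Section rmx.
Context {R : realType} {N : nat} (i0 : 'I_N).

Definition emx (r : 'I_N -> R) : \bar R := (\big[Order.max/-oo%E]_(j < N) (r j)%:E)%E.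
Definition rmx (r : 'I_N -> R) : R := fine (emx r).

Lemma emx_ex r : exists j, emx r = (r j)%:E.
Proof.
rewrite /emx.
have [j _ ->] := @eq_bigmax _ _ _ (-oo%E) i0 xpredT (fun j => (r j)%:E) isT
  (fun i _ => leNye _).
by exists j.
Qed.

Lemma emxE r : emx r = (rmx r)%:E.
Proof. by rewrite /rmx; have [j ->] := emx_ex r. Qed.

Lemma rmx_ex r : exists j, rmx r = r j.
Proof. by have [j Hj] := emx_ex r; exists j; rewrite /rmx Hj. Qed.

Lemma rmx_ge r j : r j <= rmx r.
Proof. by rewrite -lee_fin -emxE /emx; exact: (le_bigmax -oo%E (fun j => (r j)%:E)). Qed.

Lemma rmx_le r c : (forall j, r j <= c) -> rmx r <= c.
Proof.
move=> H; rewrite -lee_fin -emxE; apply: bigmax_le => //; first exact: leNye.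
by move=> j _; rewrite lee_fin.
Qed.

Lemma rmx_shift r c : rmx (fun j => r j + c) = rmx r + c.
Proof.
apply/eqP; rewrite eq_le; apply/andP; split.
  by apply: rmx_le => j; rewrite lerD2r rmx_ge.
have [j ->] := rmx_ex r; exact: (rmx_ge (fun j => r j + c)).
Qed.

Lemma rmx_scale r (c : R) : 0 < c -> rmx (fun j => c * r j) = c * rmx r.
Proof.
move=> c0; apply/eqP; rewrite eq_le; apply/andP; split.
  by apply: rmx_le => j; rewrite ler_pM2l // rmx_ge.
have [j ->] := rmx_ex r; exact: (rmx_ge (fun j => c * r j)).
Qed.

Lemma rmx_submod p q :
  rmx (fun j => Num.max (p j) (q j)) + rmx (fun j => Num.min (p j) (q j))
  <= rmx p + rmx q.
Proof.
have h1 : rmx (fun j => Num.max (p j) (q j)) <= Num.max (rmx p) (rmx q).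
  apply: rmx_le => j; rewrite ge_max !le_max !rmx_ge /=.
  by rewrite orbT.
have h2 : rmx (fun j => Num.min (p j) (q j)) <= Num.min (rmx p) (rmx q).
  apply: rmx_le => j; rewrite le_min !ge_min !rmx_ge /=.
  by rewrite orbT.
move: h1 h2; set a := rmx p; set b := rmx q.
set c := rmx _; set e := rmx _.
case: (leP a b) => H.
  move=> h1 h2; lra.
move=> h1 h2; lra.
Qed.

Lemma rmx_abs r : `|rmx r| <= \sum_(j < N) `|r j|.
Proof.
have [j ->] := rmx_ex r.
by rewrite (bigD1 j) //= lerDl sumr_ge0.
Qed.
End rmx.



Section expect.
Context {R : realType} {d : measure_display} {Omega : measurableType d}
  (P : probability Omega R).

Definition Ex (Y : Omega -> R) : R := fine (\int[P]_w (Y w)%:E)%E.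
Definition intg (Y : Omega -> R) := P.-integrable setT (EFin \o Y).

Lemma intg_cst c : intg (fun _ => c).
Proof. exact: finite_measure_integrable_cst. Qed.

Lemma intgD Y Z : intg Y -> intg Z -> intg (fun w => Y w + Z w).
Proof.
move=> iY iZ; by apply: eq_integrable (integrableD measurableT iY iZ) => // w _ /=; rewrite EFinD.
Qed.

Lemma intgZ k Y : intg Y -> intg (fun w => k * Y w).
Proof.
move=> iY; by apply: eq_integrable (integrableZl measurableT k iY) => // w _ /=; rewrite EFinM.
Qed.

Lemma intg_fin Y : intg Y -> (\int[P]_w (Y w)%:E)%E \is a fin_num.
Proof. by move=> iY; exact: (integrable_fin_num measurableT iY). Qed.

Lemma ExE Y : intg Y -> (\int[P]_w (Y w)%:E)%E = (Ex Y)%:E.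
Proof. by move=> iY; rewrite /Ex fineK // intg_fin. Qed.

Lemma ExD Y Z : intg Y -> intg Z -> Ex (fun w => Y w + Z w) = Ex Y + Ex Z.
Proof.
move=> iY iZ; apply/EFin_inj; rewrite -ExE ?intgD // EFinD -!ExE //.
rewrite -(integralD_EFin measurableT iY iZ).
by apply: eq_integral => w _ /=; rewrite EFinD.
Qed.

Lemma ExZ k Y : intg Y -> Ex (fun w => k * Y w) = k * Ex Y.
Proof.
move=> iY; apply/EFin_inj; rewrite -ExE ?intgZ // EFinM -!ExE //.
rewrite -(integralZl measurableT iY).
by apply: eq_integral => w _ /=; rewrite EFinM.
Qed.

Lemma Ex_cst c : Ex (fun _ => c) = c.
Proof.
rewrite /Ex (_ : (\int[P]_w c%:E)%E = (c%:E * P setT)%E); last exact: integral_cst.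
by rewrite probability_setT mule1.
Qed.

Lemma Ex_le Y Z : intg Y -> intg Z -> (forall w, Y w <= Z w) -> Ex Y <= Ex Z.
Proof.
move=> iY iZ YZ; rewrite -lee_fin -!ExE //.
by apply: le_integral => // w _; rewrite lee_fin.
Qed.

End expect.



Section surplus.
Context {R : realType} {N : nat} {d : measure_display} {Omega : measurableType d}
  (P : probability Omega R) (eps : Omega -> 'rV[R]_N) (i0 : 'I_N).
Hypothesis meps : forall i, measurable_fun setT (fun w => eps w 0 i).
Hypothesis ieps : forall i, P.-integrable setT (fun w => (eps w 0 i)%:E).
Hypothesis Eeps : forall i, expectation P (fun w => eps w 0 i) = 0%E.

Definition Xf (th : 'rV[R]_N) (eta : R) (w : Omega) : R :=
  rmx (fun j => th 0 j + eta * eps w 0 j).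

Lemma meas_emx (f : 'I_N -> Omega -> R) : (forall j, measurable_fun setT (f j)) ->
  measurable_fun setT ((fun w => emx (fun j => f j w)) : Omega -> \bar R).
Proof.
move=> mf; rewrite /emx; elim: (index_enum _) => [|j s IH].
  by under eq_fun do rewrite big_nil; exact: measurable_cst.
under eq_fun do rewrite big_cons.
apply: measurable_maxe => //; exact/measurable_EFinP.
Qed.

Lemma intg_coord j (c eta : R) : intg P (fun w => c + eta * eps w 0 j).
Proof. by apply: intgD; [exact: intg_cst| apply: intgZ; exact: ieps]. Qed.

Lemma intgX th eta : intg P (Xf th eta).
Proof.
apply: (@le_integrable _ _ _ P setT measurableT _
   (EFin \o (fun w => \sum_(j < N) `|th 0 j + eta * eps w 0 j|))).
- rewrite /comp; under eq_fun do rewrite /Xf -(emxE i0).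
  apply: meas_emx => j; apply: measurable_funD; first exact: measurable_cst.
  by apply: measurable_funM => //; exact: measurable_cst.
- move=> w _ /=; rewrite lee_fin.
  apply: le_trans (rmx_abs i0 _) _.
  by rewrite ger0_norm // sumr_ge0.
- rewrite /comp; apply: (eq_integrable measurableT (fun w => \sum_(j <- index_enum 'I_N | xpredT j)
     (fun j w => (`|th 0 j + eta * eps w 0 j|)%:E) j w)) => //.
    by move=> w _; rewrite sumEFin.
  apply: integrable_sum => [|j _]; first exact: measurableT.
  exact: (integrable_norm (intg_coord j (th 0 j) eta)).
Qed.

Lemma surplusE th eta : surplus P eps eta th = Ex P (Xf th eta).
Proof.
rewrite /surplus /Ex; congr fine; apply: eq_integral => w _.
by rewrite /Xf -(emxE i0).
Qed.

Lemma surplus_scale th eta : 0 < eta ->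
  surplus P eps eta th = eta * surplus P eps 1 (eta^-1 *: th).
Proof.
move=> e0; rewrite !surplusE -ExZ; last exact: intgX.
congr Ex; apply: funext => w; rewrite /Xf -(rmx_scale i0) //.
congr rmx; apply: funext => j; rewrite !mxE; field; exact: lt0r_neq0.
Qed.

Lemma surplus_shift (th : 'rV[R]_N) (c : R) :
  surplus P eps 1 (th + c *: const_mx 1) = surplus P eps 1 th + c.
Proof.
rewrite !surplusE -[in RHS](Ex_cst P c) -ExD; [|exact: intgX|exact: intg_cst].
congr Ex; apply: funext => w; rewrite /Xf -(rmx_shift i0).
congr rmx; apply: funext => j; rewrite !mxE; ring.
Qed.

Lemma surplus_ge (th : 'rV[R]_N) i : th 0 i <= surplus P eps 1 th.
Proof.
rewrite surplusE.
have -> : th 0 i = Ex P (fun w => th 0 i + 1 * eps w 0 i).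
  rewrite ExD; [|exact: intg_cst| apply: intgZ; exact: ieps].
  rewrite Ex_cst ExZ; last exact: ieps.
  have : Ex P (fun w => eps w 0 i) = 0.
    by rewrite /Ex; move: (Eeps i); rewrite unlock => ->.
  by move=> ->; rewrite mulr0 addr0.
apply: Ex_le; [exact: intg_coord|exact: intgX|].
move=> w; exact: (rmx_ge i0 (fun j => th 0 j + 1 * eps w 0 j)).
Qed.


Lemma surplus_submod (y : 'rV[R]_N) i j (a b : R) : i != j -> 0 <= a -> 0 <= b ->
  surplus P eps 1 (y + a *: evec i + b *: evec j) + surplus P eps 1 y <=
  surplus P eps 1 (y + a *: evec i) + surplus P eps 1 (y + b *: evec j).
Proof.
move=> ij a0 b0; rewrite !surplusE -!ExD; try exact: intgX.
apply: Ex_le; try (apply: intgD; exact: intgX).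
move=> w; rewrite /Xf.
set p := fun k => (y + a *: evec i) 0 k + 1 * eps w 0 k.
set q := fun k => (y + b *: evec j) 0 k + 1 * eps w 0 k.
have := rmx_submod i0 p q.
have -> : (fun k => Num.max (p k) (q k)) =
   (fun k => (y + a *: evec i + b *: evec j) 0 k + 1 * eps w 0 k).
  apply: funext => k; rewrite /p /q !mxE /=.
  case: (eqVneq k i) => [->|ki].
    by rewrite (negbTE ij) /= !mulr1 !mulr0 !addr0 max_l //; lra.
  case: (eqVneq k j) => [->|kj] /=.
    by rewrite !mulr1 !mulr0 !addr0 max_r //; lra.
  by rewrite !mulr0 !addr0 maxxx.
have -> : (fun k => Num.min (p k) (q k)) = (fun k => y 0 k + 1 * eps w 0 k).
  apply: funext => k; rewrite /p /q !mxE /=.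
  case: (eqVneq k i) => [->|ki].
    by rewrite (negbTE ij) /= !mulr1 !mulr0 !addr0 min_r //; lra.
  case: (eqVneq k j) => [->|kj] /=.
    by rewrite !mulr1 !mulr0 !addr0 min_l //; lra.
  by rewrite !mulr0 !addr0 minxx.
by [].
Qed.

End surplus.



Section line.
Context {R : realType} {N : nat}.
Implicit Types (f : 'rV[R]_N -> R) (x u : 'rV[R]_N).

Lemma line_quot f x u (s : R) :
  (fun h : R => h^-1 *: (((fun s : R => f (x + s *: u)) \o shift s) (h *: 1) - f (x + s *: u))) =
  (fun h : R => h^-1 *: ((f \o shift (x + s *: u)) (h *: u) - f (x + s *: u))).
Proof.
apply: funext => h /=; congr (_ *: (_ - _)); congr f.
by rewrite [h%:A]mulr1 scalerDl addrCA.
Qed.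

Lemma derive_line f x u (s : R) :
  'D_1 (fun s : R => f (x + s *: u)) s = 'D_u f (x + s *: u).
Proof. by rewrite /derive line_quot. Qed.

Lemma derivable_line f x u (s : R) :
  derivable f (x + s *: u) u -> derivable (fun s : R => f (x + s *: u)) s 1.
Proof. by rewrite /derivable line_quot. Qed.

Lemma is_derive_line f x u (s : R) : (forall y, differentiable f y) ->
  is_derive s 1 (fun s : R => f (x + s *: u)) ('D_u f (x + s *: u)).
Proof.
move=> df; apply: DeriveDef; last exact: derive_line.
by apply: derivable_line; exact: diff_derivable.
Qed.

Lemma Dsum f y u : differentiable f y ->
  'D_u f y = \sum_(i < N) u 0 i * partial i f y.
Proof.
move=> df; rewrite deriveE // {1}(row_sum_delta u) linear_sum.
apply: eq_bigr => i _; rewrite linearZ /partial deriveE //.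
Qed.

End line.



Section taylor.
Context {R : realType} {N : nat}.
Implicit Types (f : 'rV[R]_N -> R) (x u : 'rV[R]_N).

Lemma is_derive_lin (p : 'I_N -> 'rV[R]_N -> R) (c : 'I_N -> R) z v :
  (forall i, derivable (p i) z v) ->
  is_derive z v (fun y => \sum_(i < N) c i * p i y)
    (\sum_(i < N) c i * 'D_v (p i) z).
Proof.
move=> dp.
have -> : (fun y => \sum_(i < N) c i * p i y) = \sum_(i < N) (c i \*: p i).
  by rewrite fct_sumE; apply: funext => y; apply: eq_bigr.
apply: is_derive_sum => i; apply: is_deriveZ; exact: derivableP.
Qed.

Variable f : 'rV[R]_N -> R.
Hypothesis df : forall y, differentiable f y.
Hypothesis dp : forall i y, differentiable (partial i f) y.

Definition G u z := \sum_(i < N) u 0 i * partial i f z.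
Definition Q u z := \sum_(i < N) u 0 i * \sum_(j < N) u 0 j * partial j (partial i f) z.

Lemma is_derive_h x u (s : R) :
  is_derive s 1 (fun s : R => f (x + s *: u)) (G u (x + s *: u)).
Proof.
apply: is_derive_eq; first exact: is_derive_line.
by rewrite Dsum.
Qed.

Lemma is_derive_G x u (s : R) :
  is_derive s 1 (fun s : R => G u (x + s *: u)) (Q u (x + s *: u)).
Proof.
have dG : forall y, is_derive y u (G u)
    (\sum_(i < N) u 0 i * 'D_u (partial i f) y).
  move=> y; apply: is_derive_lin => i; exact: diff_derivable.
apply: DeriveDef.
  apply: derivable_line; exact: (@ex_derive _ _ _ _ _ _ _ (dG _)).
rewrite derive_line (@derive_val _ _ _ _ _ _ _ (dG _)).
by apply: eq_bigr => i _; rewrite Dsum.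
Qed.

Lemma taylor x u K : (forall s, Q u (x + s *: u) <= K) ->
  f (x + u) <= f x + G u x + K / 2.
Proof.
move=> QK.
set H1 := fun s : R => G u (x + s *: u).
have cH1 : forall a b : R, {within `[a, b], continuous H1}.
  move=> a b; apply: derivable_within_continuous => s _.
  exact: (@ex_derive _ _ _ _ _ _ _ (is_derive_G x u s)).
have stepA : forall c : R, 0 <= c -> H1 c - H1 0 <= K * c.
  move=> c; rewrite le0r => /orP[/eqP->|c0]; first by rewrite subrr mulr0.
  have [xi _ ->] := MVT c0 (fun s _ => is_derive_G x u s) (cH1 0 c).
  by rewrite subr0 ler_pM2r.
set c0 := H1 0.
set psi : R -> R := (fun s : R => f (x + s *: u)) - (c0 \*: (id : R -> R)) - ((K / 2) \*: ((id : R -> R) * (id : R -> R))).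
have dpsi : forall s : R, is_derive s 1 psi (H1 s - c0 - K * s).
  move=> s; have ih := is_derive_h x u s.
  have := is_deriveB (is_deriveB ih (is_deriveZ c0 (is_derive_id s 1)))
    (is_deriveZ (K / 2) (is_deriveM (is_derive_id s 1) (is_derive_id s 1))).
  move/is_derive_eq; apply.
  rewrite /H1 /=; have sc : forall a b : R, a *: b = a * b by [].
  by rewrite !sc !mulr1; field.
have cpsi : {within `[0, 1], continuous psi}.
  apply: derivable_within_continuous => s _.
  exact: (@ex_derive _ _ _ _ _ _ _ (dpsi s)).
have [xi xiI E] := MVT ltr01 (fun s _ => dpsi s) cpsi.
have : psi 1 - psi 0 <= 0.
  rewrite E subr0 mulr1; have := stepA xi.
  rewrite in_itv /= in xiI; case/andP: xiI => xi0 _.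
  move/(_ (ltW xi0)); rewrite /c0; lra.
have e : forall s, psi s = f (x + s *: u) - c0 * s - K / 2 * (s * s) by [].
rewrite !e scale0r addr0 scale1r /c0 /H1 scale0r addr0; lra.
Qed.

End taylor.



Lemma nonincr_deriv_le0 {R : realType} (g : R -> R) (x : R) :
  (forall s, derivable g s 1) -> (forall a b, a <= b -> g b <= g a) ->
  'D_1 g x <= 0.
Proof.
move=> dg mg; apply/ler_addgt0Pr => e e0; rewrite add0r.
set k : R -> R := g - (e \*: (id : R -> R)).
have dk : forall s : R, is_derive s 1 k ('D_1 g s - e *: 1).
  move=> s; exact: (is_deriveB (derivableP (dg s)) (is_deriveZ e (is_derive_id s 1))).
have : derive1 k x <= 0.
  apply: (@decr_derive1_le0 _ k setT x).
  - by move=> s _; exact: (@ex_derive _ _ _ _ _ _ _ (dk s)).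
  - move=> a b _ _ ab; rewrite /k /=.
    have := mg _ _ (ltW ab); have : e *: b < e *: a by rewrite ltr_pM2l.
    move=> h1 h2; have sc : forall a b : R, a *: b = a * b by [].
    move: h1; rewrite !sc => h1; change (g a - e * a < g b - e * b); lra.
  - by rewrite interiorT.
rewrite derive1E (@derive_val _ _ _ _ _ _ _ (dk x)).
have sc : forall a b : R, a *: b = a * b by [].
by rewrite sc mulr1 subr_le0.
Qed.

Section hess.
Context {R : realType} {N : nat}.
Variable f : 'rV[R]_N -> R.
Hypothesis df : forall y, differentiable f y.
Hypothesis dp : forall i y, differentiable (partial i f) y.
Hypothesis fshift : forall th c, f (th + c *: const_mx 1) = f th + c.
Hypothesis fsub : forall y i j a b, i != j -> 0 <= a -> 0 <= b ->
  f (y + a *: evec i + b *: evec j) + f y <= f (y + a *: evec i) + f (y + b *: evec j).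

Lemma sum_partial y : \sum_(i < N) partial i f y = 1.
Proof.
have : 'D_(const_mx 1) f y = 'D_1 (id : R -> R) 0.
  rewrite /derive.
  have -> : (fun h : R => h^-1 *: ((f \o shift y) (h *: const_mx 1) - f y)) =
    (fun h : R => h^-1 *: (((id : R -> R) \o shift 0) (h *: 1) - id 0)).
    apply: funext => h /=.
    by rewrite [h *: const_mx 1 + y]addrC fshift [h%:A]mulr1 subr0 addr0 addrAC subrr add0r.
  by [].
rewrite derive_id Dsum //.
by under eq_bigr do rewrite mxE mul1r.
Qed.

Lemma partial_mono y i j b : i != j -> 0 <= b ->
  partial i f (y + b *: evec j) <= partial i f y.
Proof.
move=> ij b0.
set k : R -> R := fun a => f ((y + b *: evec j) + a *: evec i) - f (y + a *: evec i).
have dk : forall s : R, is_derive s 1 k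
    ('D_(evec i) f ((y + b *: evec j) + s *: evec i) - 'D_(evec i) f (y + s *: evec i)).
  by move=> s; apply: is_deriveB; exact: is_derive_line.
have := @nonincr_deriv_le0 _ k 0.
rewrite (@derive_val _ _ _ _ _ _ _ (dk 0)) !scale0r !addr0 subr_le0; apply.
  by move=> s; exact: (@ex_derive _ _ _ _ _ _ _ (dk s)).
move=> a a' aa'; rewrite /k.
have := fsub (y + a *: evec i) i j (a' - a) b ij; rewrite subr_ge0 => /(_ aa' b0).
have e1 : y + a *: evec i + (a' - a) *: evec i + b *: evec j = y + b *: evec j + a' *: evec i.
  by apply/matrixP => r c; rewrite !mxE; ring.
have e2 : y + a *: evec i + (a' - a) *: evec i = y + a' *: evec i.
  by apply/matrixP => r c; rewrite !mxE; ring.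
have e3 : y + a *: evec i + b *: evec j = y + b *: evec j + a *: evec i.
  by apply/matrixP => r c; rewrite !mxE; ring.
rewrite e1 e2 e3; lra.
Qed.

Lemma hess_offdiag y i j : i != j -> partial j (partial i f) y <= 0.
Proof.
move=> ij.
set psi : R -> R := fun s => partial i f (y + s *: evec j).
have dpsi : forall s : R, is_derive s 1 psi ('D_(evec j) (partial i f) (y + s *: evec j)).
  by move=> s; exact: is_derive_line.
have := @nonincr_deriv_le0 _ psi 0.
rewrite (@derive_val _ _ _ _ _ _ _ (dpsi 0)) scale0r addr0; apply.
  by move=> s; exact: (@ex_derive _ _ _ _ _ _ _ (dpsi s)).
move=> a b ab; rewrite /psi.
have -> : y + b *: evec j = (y + a *: evec j) + (b - a) *: evec j.
  by apply/matrixP => r c; rewrite !mxE; ring.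
by apply: partial_mono => //; rewrite subr_ge0.
Qed.

Lemma hess_colsum y j : \sum_(i < N) partial j (partial i f) y = 0.
Proof.
have dd : forall i, derivable (partial i f) y (evec j) by move=> i; exact: diff_derivable.
have H := @is_derive_lin _ _ (fun i => partial i f) (fun _ => 1) y (evec j) dd.
have := @derive_val _ _ _ _ _ _ _ H.
have -> : (fun z => \sum_(i < N) 1 * partial i f z) = cst 1.
  by apply: funext => z; under eq_bigr do rewrite mul1r; exact: sum_partial.
rewrite derive_cst => E.
apply: (eq_trans _ (esym E)); apply: eq_bigr => i _; by rewrite mul1r.
Qed.

Lemma hess_diag y j : 0 <= partial j (partial j f) y.
Proof.
have := hess_colsum y j; rewrite (bigD1 j) //= => /eqP.
rewrite addr_eq0 => /eqP ->; rewrite oppr_ge0.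
by apply: sumr_le0 => i ij; apply: hess_offdiag.
Qed.

Lemma Q_bound (u : 'rV[R]_N) (z : 'rV[R]_N) (m : R) : (forall k, `|u 0 k| <= m) ->
  Q f u z <= m ^+ 2 * (2 * hess_trace f z).
Proof.
move=> um.
set M := fun i j => partial j (partial i f) z.
have tb : forall i j, u 0 i * u 0 j * M i j <=
    m ^+ 2 * (2 * (i == j)%:R * M i j - M i j).
  move=> i j; have := um i; have := um j; rewrite !ler_norml.
  case/andP => b1 b2; case/andP => a1 a2.
  case: (eqVneq i j) => [<-|ij].
    have -> : (2 : R) * true%:R * M i i - M i i = M i i by rewrite /= mulr1; ring.
    have d := hess_diag z i.
    have : u 0 i * u 0 i <= m ^+ 2 by rewrite expr2; nra.
    move=> h; rewrite /M; nra.
  rewrite mulr0 mul0r sub0r.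
  have o := hess_offdiag z i j ij.
  have : - m ^+ 2 <= u 0 i * u 0 j by rewrite expr2; nra.
  move=> h; rewrite /M; nra.
rewrite /Q.
under eq_bigr do rewrite mulr_sumr.
apply: le_trans (_ : \sum_(i < N) \sum_(j < N) m ^+ 2 * (2 * (i == j)%:R * M i j - M i j) <= _).
  apply: ler_sum => i _; apply: ler_sum => j _; rewrite mulrA; exact: tb.
rewrite exchange_big /=; under eq_bigr do rewrite -mulr_sumr.
rewrite -mulr_sumr; apply: ler_wpM2l; first exact: sqr_ge0.
rewrite /hess_trace mulr_sumr; apply: ler_sum => j _.
rewrite sumrB (_ : \sum_(i < N) M i j = 0); last exact: hess_colsum.
rewrite subr0 (bigD1 j) //= eqxx mulr1 big1 ?addr0 //.
by move=> i ij; rewrite (negbTE ij) mulr0 mul0r.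
Qed.

End hess.



Lemma partial_scale {R : realType} {N : nat} (g f : 'rV[R]_N -> R) (eta : R)
  (th : 'rV[R]_N) (i : 'I_N) :
  0 < eta -> (forall z, g z = eta * f (eta^-1 *: z)) ->
  (forall y, differentiable f y) ->
  partial i g th = partial i f (eta^-1 *: th).
Proof.
move=> e0 Hg df.
rewrite /partial -[th in LHS]addr0 -[0 in LHS](scale0r (evec i)) -derive_line.
set k : R -> R := fun t => f (eta^-1 *: th + t *: evec i).
set l : R -> R := eta^-1 \*: (id : R -> R).
have -> : (fun s : R => g (th + s *: evec i)) = eta \*: (k \o l).
  apply: funext => s; rewrite Hg /k /l /=; congr (_ * f _).
  by rewrite scalerDr scalerA.
have dl : forall s : R, is_derive s 1 l (eta^-1 *: 1) by move=> s; exact: (is_deriveZ eta^-1 (is_derive_id s 1)).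
have dk : forall s : R, derivable k s 1.
  by move=> s; apply: derivable_line; exact: diff_derivable.
have dkl : derivable (k \o l) 0 1.
  apply/derivable1_diffP; apply: differentiable_comp.
    by apply/derivable1_diffP; exact: (@ex_derive _ _ _ _ _ _ _ (dl 0)).
  by apply/derivable1_diffP.
rewrite deriveZ // -derive1E derive1_comp //.
rewrite !derive1E (@derive_val _ _ _ _ _ _ _ (dl 0)).
have l0 : l 0 = 0 by rewrite /l /= /GRing.scale /= mulr0.
rewrite l0 /k derive_line scale0r addr0.
have sc : forall a b : R, a *: b = a * b by [].
rewrite !sc mulr1 mulrCA mulfV ?mulr1 //; exact: lt0r_neq0.
Qed.



Lemma alg_bound {R : realType} (a L T m : R) : 0 < a -> 0 < L -> 0 < T -> 0 < m ->
  Num.sqrt (L * T * m ^+ 2 / (2 * a)) * a +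
  L / (2 * Num.sqrt (L * T * m ^+ 2 / (2 * a))) * T * m ^+ 2
  <= m * Num.sqrt (2 * a * L * T).
Proof.
move=> a0 L0 T0 m0.
have K0 : 0 < L * T * m ^+ 2 / (2 * a).
  by apply: divr_gt0; [apply: mulr_gt0; [exact: mulr_gt0|exact: exprn_gt0]|apply: mulr_gt0].
set s := Num.sqrt _.
have s0 : 0 < s by rewrite sqrtr_gt0.
have s2 : s ^+ 2 = L * T * m ^+ 2 / (2 * a) by rewrite sqr_sqrtr // ltW.
set w := Num.sqrt (2 * a * L * T).
have w0 : 0 <= w by exact: sqrtr_ge0.
have w2 : w ^+ 2 = 2 * a * L * T by rewrite sqr_sqrtr // ltW // !mulr_gt0.
have E1 : m * w = 2 * a * s.
  apply/eqP; rewrite -(@eqrXn2 _ 2) //; last by rewrite !mulr_ge0 // ltW.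
    rewrite !exprMn w2 s2; apply/eqP; field; exact: lt0r_neq0.
  by rewrite mulr_ge0 // ltW.
rewrite E1 le_eqVlt; apply/orP; left; apply/eqP.
have sn : s != 0 by exact: lt0r_neq0.
have an : a != 0 by exact: lt0r_neq0.
have hK : L * T * m ^+ 2 = 2 * a * s ^+ 2 by rewrite s2; field.
have H : L / (2 * s) * T * m ^+ 2 = (L * T * m ^+ 2) / (2 * s) by field.
rewrite H hK; field. all: try done.
Qed.

Lemma evec_simplex {R : realType} {N : nat} (i : 'I_N) : @simplex R N (evec i).
Proof.
split; first by move=> j; rewrite /evec mxE ler0n.
rewrite (bigD1 i) //= /evec mxE !eqxx /= big1 ?addr0 // => j ji.
by rewrite mxE (negbTE ji) andbF.
Qed.

Lemma cumul0 {R : realType} {N : nat} (u : nat -> 'rV[R]_N) : cumul u 0 = 0.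
Proof. by rewrite /cumul big_geq. Qed.

Lemma cumulS {R : realType} {N : nat} (u : nat -> 'rV[R]_N) t :
  cumul u t.+1 = cumul u t + u t.+1.
Proof. by rewrite /cumul big_nat_recr. Qed.

Theorem theorem1 (R : realType) (N : nat) (d : measure_display)
  (Omega : measurableType d) (P : probability Omega R)
  (eps : Omega -> 'rV[R]_N) (L : R) :
  (2 <= N)%N ->
  assumption1 P eps ->
  assumption2 (surplus P eps 1) L ->
  (forall (eta : R) (T : nat) (u : nat -> 'rV[R]_N) (umax : R),
     0 < eta -> (1 <= T)%N ->
     (forall t, (1 <= t <= T)%N -> forall i, `|u t 0 i| <= umax) ->
     regret T u (ssa P eps eta u)
       <= eta * surplus P eps 1 0 + L / (2 * eta) * T%:R * umax ^+ 2) /\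
  (forall (T : nat) (u : nat -> 'rV[R]_N) (umax : R),
     (1 <= T)%N ->
     (forall t, (1 <= t <= T)%N -> forall i, `|u t 0 i| <= umax) ->
     0 < surplus P eps 1 0 ->
     let eta := Num.sqrt (L * T%:R * umax ^+ 2 / (2 * surplus P eps 1 0)) in
     regret T u (ssa P eps eta u)
       <= umax * Num.sqrt (2 * surplus P eps 1 0 * L * T%:R)).
Proof.
move=> N2 [meps [ieps [Eeps _]]] [[df [dp _]] [L0 hb]].
have i0 : 'I_N := Ordinal (leq_trans (isT : (0 < 2)%N) N2).
set f := surplus P eps 1.
have fshift := surplus_shift P eps i0 meps ieps.
have fsub := surplus_submod P eps i0 meps ieps.
have fge := surplus_ge P eps i0 meps ieps Eeps.
have part1 : forall (eta : R) (T : nat) (u : nat -> 'rV[R]_N) (umax : R),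
     0 < eta -> (1 <= T)%N ->
     (forall t, (1 <= t <= T)%N -> forall i, `|u t 0 i| <= umax) ->
     regret T u (ssa P eps eta u)
       <= eta * f 0 + L / (2 * eta) * T%:R * umax ^+ 2.
  move=> eta T u umax e0 T1 ub.
  have en : eta != 0 by exact: lt0r_neq0.
  set C := L / (2 * eta) * umax ^+ 2.
  set y := fun t => eta^-1 *: cumul u t.
  set x := ssa P eps eta u.
  have xE : forall t i, x t 0 i = partial i f (y t.-1).
    move=> t i; rewrite /x /ssa /grad mxE; apply: partial_scale => // z.
    exact: surplus_scale.
  have dotE : forall t, dotv (u t) (x t) = eta * G f (eta^-1 *: u t) (y t.-1).
    move=> t; rewrite /dotv /G mulr_sumr; apply: eq_bigr => i _.
    by rewrite xE mxE; field.
  have step : forall t, (1 <= t <= T)%N ->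
      eta * f (y t) <= eta * f (y t.-1) + dotv (u t) (x t) + C.
    case=> // t /andP[_ tT] /=.
    set v := eta^-1 *: u t.+1.
    have yS : y t.+1 = y t + v by rewrite /y /v cumulS scalerDr.
    have vb : forall k, `|v 0 k| <= umax / eta.
      have ei : 0 <= eta^-1 by rewrite invr_ge0 ltW.
      move=> k; rewrite /v mxE normrM (ger0_norm ei) mulrC ler_pM2r ?invr_gt0 //.
      by apply: ub; rewrite tT.
    have hQ : forall s : R, Q f v (y t + s *: v) <= (umax / eta) ^+ 2 * L.
      move=> s; apply: le_trans (@Q_bound _ _ f df dp fshift fsub _ _ _ vb) _.
      by apply: ler_wpM2l; [exact: sqr_ge0|exact: hb].
    have := @taylor _ _ f df dp (y t) v _ hQ.
    rewrite -yS dotE /= -/v => hT.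
    have := ler_wpM2l (ltW e0) hT.
    have -> : C = eta * ((umax / eta) ^+ 2 * L / 2) by rewrite /C; field.
    by rewrite !mulrDr.
  have tele : forall n, (n <= T)%N ->
      eta * f (y n) <= eta * f 0 + \sum_(1 <= t < n.+1) dotv (u t) (x t) + n%:R * C.
    elim=> [_|n IH nT].
      by rewrite /y cumul0 scaler0 big_geq // mul0r !addr0.
    rewrite big_nat_recr //= -natr1 mulrDl mul1r.
    have := step n.+1; rewrite ltn0Sn nT => /(_ isT) /= hs.
    have := IH (ltnW nT); lra.
  have supb : sup [set dotv (cumul u T) z | z in @simplex R N] <= eta * f (y T).
    apply: ge_sup; first by exists (dotv (cumul u T) (evec i0)), (evec i0) => //;
      exact: evec_simplex.
    move=> _ [z [z0 z1] <-]; rewrite /dotv.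
    apply: le_trans (_ : \sum_(i < N) (eta * f (y T)) * z 0 i <= _).
      apply: ler_sum => i _; apply: ler_wpM2r => //.
      have := fge (y T) i; rewrite /y mxE => hi.
      by have := ler_wpM2l (ltW e0) hi; rewrite mulrA mulfV // mul1r.
    by rewrite -mulr_sumr z1 mulr1.
  rewrite /regret -/x.
  have := tele T (leqnn T); rewrite /C => h; lra.
split; first exact: part1.
move=> T u umax T1 ub a0 /=.
set eta := Num.sqrt (L * T%:R * umax ^+ 2 / (2 * f 0)).
have um0 : 0 <= umax by apply: le_trans (ub 1%N _ i0); [exact: normr_ge0|rewrite leqnn T1].
case: (eqVneq umax 0) => [um|umn].
  have u0 : forall t, (1 <= t <= T)%N -> u t = 0.
    move=> t tT; apply/matrixP => r k; rewrite (ord1 r) mxE.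
    by apply/eqP; rewrite -normr_le0 -um ub.
  rewrite /regret um mul0r.
  have c0 : cumul u T = 0.
    rewrite /cumul big_nat_cond big1 // => t /andP[/andP[t1 tT] _]; apply: u0.
    by rewrite t1.
  rewrite c0.
  have -> : [set dotv 0 z | z in @simplex R N] = [set (0 : R)].
    apply/seteqP; split => [_ [z _ <-]|_ ->] /=.
      by rewrite /dotv big1 // => i _; rewrite mxE mul0r.
    exists (evec i0); first exact: evec_simplex.
    by rewrite /dotv big1 // => i _; rewrite mxE mul0r.
  rewrite sup1 big_nat_cond big1 ?subrr // => t /andP[/andP[t1 tT] _].
  by rewrite u0 ?t1 // /dotv big1 // => i _; rewrite mxE mul0r.
have umax0 : 0 < umax by rewrite lt_neqAle eq_sym umn.
have T0 : 0 < T%:R :> R by rewrite ltr0n.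
have e0 : 0 < eta.
  rewrite sqrtr_gt0; apply: divr_gt0; last by rewrite mulr_gt0.
  by rewrite !mulr_gt0 // exprn_gt0.
apply: le_trans (part1 eta T u umax e0 T1 ub) _.
exact: (alg_bound (f 0) L T%:R umax a0 L0 T0 umax0).
Qed.
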